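(* Let $G$ be a graph containing a subgraph $F$ isomorphic to $F_4$, with vertices labelled $u_0,u_1,u_2,u_3$ as described in the context and $U=\{u_1,u_2,u_3\}$, and let $T$ be a triangle of $G$ vertex-disjoint from $F$. If $e(U,V(T))\geq 7$, then $G[V(T)\cup V(F)]$ contains a triangle and a quadrilateral that are vertex-disjoint.
   Context: All graphs are finite, simple and undirected. $F_4$ denotes the graph with $4$ vertices and $4$ edges not containing a $4$-cycle, i.e. a claw (star $K_{1,3}$) with one additional edge joining two of its leaves. In a copy of $F_4$, $u_0$ denotes its unique vertex of degree $3$ in $F_4$, $u_1,u_2$ its two vertices of degree $2$ in $F_4$, and $u_3$ its unique vertex of degree $1$ in $F_4$ (so $F_4$ has edges $u_0u_1,u_0u_2,u_1u_2,u_0u_3$). For disjoint vertex sets $L,M$, $e(L,M)$ is the number of edges of $G$ between $L$ and $M$. $G[W]$ is the subgraph induced by $W$. *)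

(* Defs.v *)
(* A simple graph on a finite vertex type T is a symmetric,
   irreflexive boolean relation e : rel T. *)
From mathcomp Require Import all_boot.
Set Implicit Arguments. Unset Strict Implicit. Unset Printing Implicit Defensive.

Section GraphDefs.
Variable T : finType.
Variable e : rel T.

Definition is_triangle (a b c : T) : bool :=
  [&& uniq [:: a; b; c], e a b, e b c & e a c].

Definition is_quadrilateral (a b c d : T) : bool :=
  [&& uniq [:: a; b; c; d], e a b, e b c, e c d & e d a].

Definition edges_between (L M : {set T}) : nat :=
  #|[set p in setX L M | e p.1 p.2]|.
End GraphDefs.

(* Main.v *)
Require Import Defs.
From mathcomp Require Import all_boot.

Lemma eb_le (T : finType) (e : rel T) (a b c x y z : T) :
  edges_between e [set a; b; c] [set x; y; z] <=
  e a x + e a y + e a z + e b x + e b y + e b z + e c x + e c y + e c z.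
Proof.
set s := [:: (a,x); (a,y); (a,z); (b,x); (b,y); (b,z); (c,x); (c,y); (c,z)].
apply: (@leq_trans #|filter (fun p => e p.1 p.2) s|).
  apply: subset_leq_card; apply/subsetP => -[p1 p2] Hp.
  rewrite mem_filter; move: Hp; rewrite !inE /= => /andP[/andP[H1 H2] He].
  rewrite He /= /s.
  case/orP: H1 => [/orP[]|] /eqP->; case/orP: H2 => [/orP[]|] /eqP->; by rewrite eqxx ?orbT.
apply: leq_trans (card_size _) _.
rewrite size_filter /s /=.
by rewrite !addnA addn0.
Qed.

Theorem lemma9 (T : finType) (e : rel T)
    (e_sym : symmetric e) (e_irr : irreflexive e)
    (u0 u1 u2 u3 t1 t2 t3 : T) :
  (* F : a copy of F_4 with edges u0u1, u0u2, u1u2, u0u3 *)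
  uniq [:: u0; u1; u2; u3] ->
  e u0 u1 -> e u0 u2 -> e u1 u2 -> e u0 u3 ->
  (* T : a triangle of G vertex-disjoint from F *)
  is_triangle e t1 t2 t3 ->
  [disjoint [set t1; t2; t3] & [set u0; u1; u2; u3]] ->
  7 <= edges_between e [set u1; u2; u3] [set t1; t2; t3] ->
  exists a b c x y z w : T,
    [/\ {subset [:: a; b; c; x; y; z; w] <= [set t1; t2; t3; u0; u1; u2; u3]},
        is_triangle e a b c,
        is_quadrilateral e x y z w &
        [disjoint [set a; b; c] & [set x; y; z; w]]].
Proof.
move=> Hu e01 e02 e12 e03 Ht Hd H7.
have H := leq_trans H7 (@eb_le _ e u1 u2 u3 t1 t2 t3).
move: Ht Hu; rewrite /is_triangle /= !inE !negb_or !andbT.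
move=> /and4P[/andP[/andP[n12 n13] n23] f12 f23 f13].
move=> /and3P[/and3P[m01 m02 m03] /andP[m12 m13] m23].
have Dx : forall v, v \in [set t1; t2; t3] -> [&& v != u0, v != u1, v != u2 & v != u3].
  move=> v Hv; have := disjointFr Hd Hv; rewrite !inE.
  by case: (v == u0); case: (v == u1); case: (v == u2); case: (v == u3).
have /and4P[p10 p11 p12 p13] := Dx t1 ltac:(by rewrite !inE eqxx ?orbT).
have /and4P[p20 p21 p22 p23] := Dx t2 ltac:(by rewrite !inE eqxx ?orbT).
have /and4P[p30 p31 p32 p33] := Dx t3 ltac:(by rewrite !inE eqxx ?orbT).
clear Dx Hd H7.
Ltac fin e_sym := repeat (apply/andP; split); rewrite ?negb_or;
  repeat (apply/andP; split); try done; try (by rewrite e_sym); try (by rewrite eq_sym).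
Ltac go e_sym a b c x y z w :=
  exists a, b, c, x, y, z, w; split;
  [ apply/allP; rewrite /= !inE !eqxx ?orbT //
  | rewrite /is_triangle /= !inE; fin e_sym
  | rewrite /is_quadrilateral /= !inE; fin e_sym
  | rewrite disjoint_subset; apply/subsetP => v; rewrite !inE;
    move=> /orP[/orP[]|] /eqP->; rewrite ?inE; fin e_sym ].
case h1: (e u3 t1); case h2: (e u3 t2); case h3: (e u3 t3).
- go e_sym u0 u1 u2 u3 t1 t3 t2.
- go e_sym u0 u1 u2 u3 t1 t3 t2.
- go e_sym u0 u1 u2 u3 t1 t2 t3.
- have [a1 a2 a3] : [/\ e u1 t2, e u1 t3 & e u2 t1].
    move: H; rewrite h1 h2 h3.
    by case: (e u1 t1); case: (e u1 t2); case: (e u1 t3); case: (e u2 t1); case: (e u2 t2); case: (e u2 t3).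
  go e_sym u1 t2 t3 u0 u3 t1 u2.
- go e_sym u0 u1 u2 u3 t2 t1 t3.
- have [a1 a2 a3] : [/\ e u1 t1, e u1 t3 & e u2 t2].
    move: H; rewrite h1 h2 h3.
    by case: (e u1 t1); case: (e u1 t2); case: (e u1 t3); case: (e u2 t1); case: (e u2 t2); case: (e u2 t3).
  go e_sym u1 t1 t3 u0 u3 t2 u2.
- have [a1 a2 a3] : [/\ e u1 t1, e u1 t2 & e u2 t3].
    move: H; rewrite h1 h2 h3.
    by case: (e u1 t1); case: (e u1 t2); case: (e u1 t3); case: (e u2 t1); case: (e u2 t2); case: (e u2 t3).
  go e_sym u1 t1 t2 u0 u3 t3 u2.
- move: H; rewrite h1 h2 h3.
  by case: (e u1 t1); case: (e u1 t2); case: (e u1 t3); case: (e u2 t1); case: (e u2 t2); case: (e u2 t3).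
Qed.
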